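(* For every prime $p$, $\operatorname{rank}_{\mathbb Z}K(C_p\times C_p,C_p)=p^2$.
   Context: For $K\le G=C_p\times C_p$ and a homomorphism $\rho:K\to C_p$, $K\times\rho=\{(k,\rho(k))\}\le G\times C_p$. $B(G,C_p)$ is the subgroup of the Burnside ring $B(G\times C_p)$ (free on the subgroups of $G\times C_p$) spanned by graphs. $K(G\times C_p)$ is the kernel of $B(G\times C_p)\to R_{\mathbb Q}(G\times C_p)$, $S\mapsto[\mathbb Q[(G\times C_p)/S]]$, and $K(G,C_p)=K(G\times C_p)\cap B(G,C_p)$. *)

(* Defs.v *)
From HB Require Import structures.
From mathcomp Require Import all_boot all_order all_algebra all_fingroup all_solvable all_field all_character.
Set Implicit Arguments. Unset Strict Implicit. Unset Printing Implicit Defensive.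
Import GRing.Theory Num.Theory.

(* C_p, realised as the additive group of 'Z_p (p prime, so p >= 2). *)
Definition Cp (p : nat) : finGroupType := [the finGroupType of 'Z_p].
Definition GG (p : nat) : finGroupType := [the finGroupType of (Cp p * Cp p)%type].
Definition GC (p : nat) : finGroupType := [the finGroupType of (GG p * Cp p)%type].

Definition graph_set (p : nat) (K : {group GG p}) (rho : GG p -> Cp p) : {set GC p} :=
  [set ((k, rho k) : GC p) | k in K].

Definition is_graph (p : nat) (S : {group GC p}) : Prop :=
  exists (K : {group GG p}) (rho : {morphism K >-> Cp p}),
    (S : {set GC p}) = graph_set K rho.

(* Elements of the Burnside ring B(G x C_p): Z-linear combinations of the
   subgroups of G x C_p (the group is abelian, so conjugacy classes of subgroups
   are subgroups).  The basis element S is the G x C_p-set (G x C_p)/S. *)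
Definition burnside (p : nat) := {ffun {group GC p} -> int}.

Definition in_BGC (p : nat) (x : burnside p) : Prop :=
  forall S : {group GC p}, ~ is_graph S -> x S = 0%R.

(* the character of the permutation module Q[(G x C_p)/S] (computed over algC),
   i.e. the induced trivial character. *)
Definition perm_char (p : nat) (S : {group GC p}) : 'CF([set: GC p]) :=
  ('Ind[[set: GC p], S] 1)%R.

(* image of x in R_Q(G x C_p), represented through characters *)
Definition to_RQ (p : nat) (x : burnside p) : 'CF([set: GC p]) :=
  (\sum_(S : {group GC p}) perm_char S *~ x S)%R.

(* membership in K(G, C_p) = K(G x C_p) /\ B(G, C_p) *)
Definition in_KGC (p : nat) (x : burnside p) : Prop :=
  in_BGC x /\ to_RQ x = 0%R.

Definition Z_independent (p n : nat) (v : 'I_n -> burnside p) : Prop :=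
  forall c : 'I_n -> int,
    (forall S : {group GC p}, (\sum_(i < n) c i * v i S)%R = 0%R) ->
    forall i, c i = 0%R.

Definition rank_KGC_eq (p r : nat) : Prop :=
  (exists v : 'I_r -> burnside p, (forall i, in_KGC (v i)) /\ Z_independent v) /\
  (forall (n : nat) (v : 'I_n -> burnside p),
      (forall i, in_KGC (v i)) -> Z_independent v -> n <= r).

(* Main.v *)
Require Import Defs.
From mathcomp Require Import all_boot all_order all_algebra all_fingroup all_solvable all_field all_character.
Set Implicit Arguments. Unset Strict Implicit. Unset Printing Implicit Defensive.
Import GRing.Theory Num.Theory.
From Stdlib Require Import Classical_Prop.
From mathcomp Require Import zify.

Lemma cfunMz (gT : finGroupType) (B : {set gT}) (f : 'CF(B)) (n : int) h :
  ((f *~ n) h = f h *~ n)%R.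
Proof.
have Hn : forall m : nat, ((f *+ m) h = f h *+ m)%R.
  by elim=> [|m IH]; rewrite ?mulr0n ?cfunE // !mulrS cfunE IH.
by case: n => m; rewrite ?NegzE ?mulrNz ?cfunE Hn.
Qed.

Section IL.
Local Open Scope ring_scope.
Lemma indep_le (I : finType) n (w : 'I_n -> I -> int) :
  (forall c : 'I_n -> int, (forall j, \sum_i c i * w i j = 0) -> forall i, c i = 0) ->
  (n <= #|I|)%N.
Proof.
Local Open Scope ring_scope.
move=> H.
pose M : 'M[rat]_(n, #|I|) := \matrix_(i, j) (w i (enum_val j))%:~R.
suff : row_free M by rewrite -row_leq_rank => /leq_trans; apply; apply: rank_leq_col.
rewrite -kermx_eq0; apply/negPn/negP => /matrix0Pn [i0 [j0 nz]].
pose u := row i0 (kermx M).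
have uM : u *m M = 0 by rewrite /u -row_mul mulmx_ker row0.
pose c i := numq (u 0 i) * \prod_(k | k != i) denq (u 0 k).
have cE : forall i, (c i)%:~R = u 0 i * (\prod_k denq (u 0 k))%:~R :> rat.
  by move=> i; rewrite /c [in RHS](bigD1 i) //= !intrM numqE mulrA.
have cz : forall j, \sum_i c i * w i j = 0.
  move=> j; apply/eqP; rewrite -(intr_eq0 rat) rmorph_sum /=.
  have := congr1 (fun m : 'rV_#|I| => m 0 (enum_rank j)) uM.
  rewrite !mxE /= => e.
  rewrite (eq_bigr (fun i => u 0 i * M i (enum_rank j) * (\prod_k denq (u 0 k))%:~R)).
    by rewrite -mulr_suml e mul0r.
  move=> i _; rewrite intrM cE /M mxE [X in _ = _ * X * _]mxE enum_rankK.
  by rewrite mulrAC.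
have := H c cz j0; move/eqP; rewrite /c mulf_eq0 numq_eq0.
rewrite (negbTE (_ : u 0 j0 != 0)) /=; last by rewrite /u mxE.
by apply/negP; apply/prodf_neq0 => k _; apply: denq_neq0.
Qed.

End IL.

Section S.
Variable p : nat.
Hypothesis pr : prime p.

Lemma mulCpE (x y : Cp p) : (x * y)%g = (x + y)%R :> 'Z_p.
Proof. by []. Qed.

Lemma p_gt1 : 1 < p. Proof. exact: prime_gt1. Qed.

Lemma card_Cp : #|Cp p| = p.
Proof. rewrite /Cp /= card_ord; exact: Zp_cast p_gt1. Qed.

Lemma card_GG : #|GG p| = p ^ 2.
Proof. by rewrite /GG /= card_prod card_Cp. Qed.

Lemma card_GC : #|GC p| = p ^ 3.
Proof. by rewrite /GC /= card_prod card_GG card_Cp expnS mulnC. Qed.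

Lemma GC_abelian : abelian [set: GC p].
Proof.
apply/centsP => x _ y _; rewrite /commute.
case: x => [[x1 x2] x3]; case: y => [[y1 y2] y3].
have E : forall u v : Cp p, (u * v = v * u)%g by move=> u v; exact: (addrC (u : 'Z_p) v).
change (((x1*y1)%g, (x2*y2)%g, (x3*y3)%g) = ((y1*x1)%g, (y2*x2)%g, (y3*x3)%g)).
by rewrite E (E x2) (E x3).
Qed.


Definition rhof (a b : 'Z_p) (k : GG p) : Cp p :=
  (a * (k.1 : 'Z_p) + b * (k.2 : 'Z_p))%R.

Lemma rhof_morph a b : {in [set: GG p] &, {morph rhof a b : x y / (x * y)%g >-> (x * y)%g}}.
Proof.
move=> x y _ _; rewrite /rhof.
change (a * ((x.1 : 'Z_p) + y.1) + b * ((x.2 : 'Z_p) + y.2) = 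
   (a * x.1 + b * x.2) + (a * y.1 + b * y.2))%R.
by rewrite !mulrDr addrACA.
Qed.

Definition rhoM a b : {morphism [set: GG p] >-> Cp p} := Morphism (@rhof_morph a b).

Lemma graph_group (K : {group GG p}) (rho : {morphism K >-> Cp p}) :
  group_set (graph_set K rho).
Proof.
apply/group_setP; split.
  by apply/imsetP; exists 1%g; rewrite ?group1 // morph1.
move=> _ _ /imsetP[k kK ->] /imsetP[l lK ->].
apply/imsetP; exists (k * l)%g; first by rewrite groupM.
by rewrite morphM.
Qed.

Definition Tg a b : {group GC p} := Group (graph_group (rhoM a b)).

Lemma Tg_graph a b : is_graph (Tg a b).
Proof. by exists [set: GG p]%G, (rhoM a b). Qed.

Lemma card_graph (K : {group GG p}) (rho : {morphism K >-> Cp p}) :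
  #|graph_set K rho| = #|K|.
Proof. by rewrite card_imset // => x y [] . Qed.

Lemma card_Tg a b : #|Tg a b| = p ^ 2.
Proof. by have := card_graph (rhoM a b); rewrite /= cardsT card_GG. Qed.


Lemma Kset_group a b (S : {group GC p}) :
  group_set [set k | ((k, rhof a b k) : GC p) \in S].
Proof.
apply/group_setP; split.
  rewrite inE; have -> : rhof a b 1%g = 1%g by exact: (morph1 (rhoM a b)).
  exact: group1.
move=> k l; rewrite !inE => kS lS.
have -> : rhof a b (k * l)%g = (rhof a b k * rhof a b l)%g.
  by apply: (morphM (rhoM a b)); rewrite inE.
exact: (groupM kS lS).
Qed.

Lemma sub_Tg_graph a b (S : {group GC p}) : S \subset Tg a b -> is_graph S.
Proof.
move=> sST.
pose K := Group (Kset_group a b S).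
exists K, (restrm (subsetT K) (rhoM a b)).
apply/setP => g; apply/idP/imsetP.
  move=> gS; have /imsetP[k _ gE] := subsetP sST g gS.
  by exists k; rewrite // inE -gE.
by move=> [k]; rewrite inE => kS ->.
Qed.


Definition cc (S : {group GC p}) (h : GC p) : nat :=
  (#|[set: GC p] : S|%g * (h \in S))%N.

Lemma normal_all (S : {group GC p}) : (S <| [set: GC p])%g.
Proof. by rewrite -sub_abelian_normal ?subsetT ?GC_abelian. Qed.

Lemma to_RQ_E (x : burnside p) h :
  to_RQ x h = ((\sum_S x S * (cc S h)%:Z)%:~R)%R.
Proof.
rewrite /to_RQ sum_cfunE rmorph_sum /=; apply: eq_bigr => S _.
rewrite cfunMz /perm_char (cfInd_cfun1 (normal_all S)) cfunE (cfuniE _ (normal_all S)).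
rewrite /cc rmorphM /= mulrC -mulrzr.
by rewrite [RHS]mulrC -pmulrn natrM [X in (X * _)%R]mulrC.
Qed.


Lemma RQ0 (x : burnside p) :
  to_RQ x = 0%R <-> forall h, (\sum_S x S * (cc S h)%:Z)%R = 0%R.
Proof.
split=> [H h | H].
  by apply/eqP; rewrite -(intr_eq0 algC) -to_RQ_E H cfunE.
by apply/cfunP => h; rewrite to_RQ_E H cfunE.
Qed.

Lemma cc_E (S : {group GC p}) h : cc S h = (p ^ 3 %/ #|S| * (h \in S))%N.
Proof. by rewrite /cc -divgS ?subsetT // cardsT card_GC. Qed.

Lemma expg_pair (gT1 gT2 : finGroupType) (u : gT1) (v : gT2) n :
  (((u, v) : gT1 * gT2) ^+ n = (u ^+ n, v ^+ n))%g.
Proof.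
elim: n => [|n IH]; first by [].
by rewrite !expgS IH.
Qed.

Lemma rho_lin (K : {group GG p}) (rho : {morphism K >-> Cp p}) :
  (forall k, k \in K) ->
  forall k, rho k = rhof (rho ((1%R : 'Z_p), (0%R : 'Z_p))) (rho ((0%R : 'Z_p), (1%R : 'Z_p))) k.
Proof.
move=> KT [k1 k2].
have E : ((k1, k2) : GG p) = 
  ((((Zp1 : 'Z_p) : Cp p), (1%g : Cp p)) ^+ (k1 : 'Z_p) *
   ((1%g : Cp p), ((Zp1 : 'Z_p) : Cp p)) ^+ (k2 : 'Z_p))%g.
  rewrite !expg_pair !Zp1_expgz !expg1n.
  by change ((k1, k2) = ((k1 * 1)%g, (1 * k2)%g)); rewrite mulg1 mul1g.
rewrite {1}E morphM ?KT // !morphX ?KT // !Zp_expg.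
have -> : ((1%R : 'Z_p), (0%R : 'Z_p)) = (Zp1, 1%g) :> GG p by [].
have -> : ((0%R : 'Z_p), (1%R : 'Z_p)) = (1%g, Zp1) :> GG p by [].
rewrite /rhof /= -(Zp_mulrn (rho (Zp1, 1%g))) -(Zp_mulrn (rho (1%g, Zp1))).
rewrite -(mulr_natr (rho (Zp1, 1%g)) k1) -(mulr_natr (rho (1%g, Zp1)) k2) (natr_Zp k1) (natr_Zp k2).
exact: mulCpE.
Qed.


Lemma graph_cases (S : {group GC p}) : is_graph S ->
  #|S| = 1%N \/ #|S| = p \/ exists a b, S = Tg a b.
Proof.
case=> K [rho E].
have cS : #|S| = #|K| by rewrite E card_graph.
have : #|K| %| p ^ 2.
  by rewrite -card_GG -cardsT; apply: (cardSg (G := [set: GG p]%G)); apply: subsetT.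
case/(dvdn_pfactor _ _ pr) => m; rewrite leq_eqVlt ltnS leq_eqVlt ltnS leqn0.
case/or3P => /eqP -> cK.
- right; right.
  have KT : forall k, k \in K.
    have : K == [set: GG p] :> {set GG p}.
      by rewrite eqEcard subsetT /= cK -card_GG -cardsT.
    by move/eqP => -> k; rewrite inE.
  exists (rho ((1%R : 'Z_p), (0%R : 'Z_p))), (rho ((0%R : 'Z_p), (1%R : 'Z_p))).
  apply: val_inj; rewrite /= E; apply/setP => g.
  apply/imsetP/imsetP => [][k kK ->]; exists k; rewrite ?KT ?inE //.
  + by rewrite -(rho_lin rho KT).
  + by rewrite -(rho_lin rho KT).
- by right; left; rewrite cS cK expn1.
- by left; rewrite cS cK.
Qed.


Lemma card1_group (S : {group GC p}) : #|S| = 1%N -> S = 1%G.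
Proof. by move=> cS; apply: val_inj => /=; apply/eqP; rewrite trivg_card1 cS. Qed.

Lemma p_pos : 0 < p. Proof. exact: prime_gt0. Qed.

Lemma uniq_p (S S' : {group GC p}) g :
  #|S| = p -> #|S'| = p -> g \in S -> g \in S' -> g != 1%g -> S = S'.
Proof.
move=> cS cS' gS gS' ng.
have cH : #|S :&: S'| = p.
  have : #|S :&: S'| %| #|S| by apply: cardSg; apply: subsetIl.
  rewrite cS.
  case/primeP: pr => _ /[apply] /orP[/eqP c1|/eqP //].
  have : (S :&: S')%G = 1%G by apply: card1_group.
  move/(congr1 val) => /= E.
  have gH : g \in S :&: S' by rewrite inE gS gS'.
  by move: gH; rewrite E inE (negbTE ng).
apply: val_inj => /=.
have E1 : S :&: S' = S.
  by apply/eqP; rewrite eqEcard subsetIl cH cS leqnn.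
have E2 : S :&: S' = S'.
  by apply/eqP; rewrite eqEcard subsetIr cH cS' leqnn.
by rewrite -E1 E2.
Qed.

Lemma ker_zero (x : burnside p) : in_KGC x -> (forall a b, x (Tg a b) = 0%R) ->
  forall S, x S = 0%R.
Proof.
case=> xB /RQ0 xK zT.
have supp : forall S : {group GC p}, x S != 0%R -> #|S| = 1%N \/ #|S| = p.
  move=> S nz; have gS : is_graph S.
    by apply: NNPP => ng; move/eqP: nz; apply; exact: xB.
  case: (graph_cases gS) => [|[|[a [b E]]]]; [by left|by right|].
  by move: nz; rewrite E zT eqxx.
have Hp : forall S : {group GC p}, #|S| = p -> x S = 0%R.
  move=> S cS.
  have : (S :!=: 1)%g.
    by rewrite trivg_card1 cS; apply/eqP => e; move: (prime_gt1 pr); rewrite e.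
  case/trivgPn => g gS ng.
  have := xK g; rewrite (bigD1 S) //= big1 => [|S' neS'].
    rewrite cc_E gS cS expnS mulKn ?p_pos // muln1 addr0 => /eqP.
    rewrite mulf_eq0 => /orP[/eqP //|].
    by move/eqP => [] /eqP; rewrite expn_eq0 (gtn_eqF (prime_gt0 pr)).
  case: (eqVneq (x S') 0%R) => [->|nz]; first by rewrite mul0r.
  case: (boolP (g \in S')) => gS'; last by rewrite cc_E (negbTE gS') muln0 mulr0.
  case: (supp S' nz) => cS'.
    by move: gS'; rewrite (card1_group cS') inE (negbTE ng).
  by move: neS'; rewrite (uniq_p cS' cS gS' gS ng) eqxx.
have H1 : x 1%G = 0%R.
  have := xK 1%g; rewrite (bigD1 1%G) //= big1 => [|S' neS'].
    rewrite cc_E group1 cards1 divn1 muln1 addr0 => /eqP.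
    rewrite mulf_eq0 => /orP[/eqP //|].
    by move/eqP => [] /eqP; rewrite expn_eq0 (gtn_eqF (prime_gt0 pr)).
  case: (eqVneq (x S') 0%R) => [->|nz]; first by rewrite mul0r.
  case: (supp S' nz) => cS'; first by move: neS'; rewrite (card1_group cS') eqxx.
  by rewrite Hp ?mul0r.
move=> S; case: (eqVneq (x S) 0%R) => // nz.
case: (supp S nz) => cS; last exact: Hp.
by rewrite (card1_group cS).
Qed.


Lemma expCp (u : Cp p) : (u ^+ p)%g = 1%g.
Proof.
rewrite Zp_expg -(Zp_mulrn u p) -(mulr_natr u p) (pchar_Zp p_gt1) mulr0.
by [].
Qed.

Lemma expGC (g : GC p) : (g ^+ p)%g = 1%g.
Proof.
case: g => [[u v] w]; rewrite !expg_pair !expCp; by [].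
Qed.

Lemma order_p (g : GC p) : g != 1%g -> #[g]%g = p.
Proof.
move=> ng.
have : (#[g] %| p)%g by rewrite order_dvdn expGC.
case/primeP: pr => _ /[apply] /orP[/eqP o1|/eqP //].
by move: ng; rewrite -order_eq1 o1.
Qed.

Lemma sum_bool (I : finType) (P Q : pred I) :
  (\sum_(i | P i) (Q i : nat) = #|[pred i | P i && Q i]|)%N.
Proof.
rewrite -sum1_card [RHS](eq_bigl (fun i => P i && Q i)) // big_mkcondr.
by apply: eq_bigr => i _; case: (Q i).
Qed.

Definition PT a b (S : {group GC p}) := (S \subset Tg a b) && (#|S| == p).

Lemma cnt1 a b g : g \in Tg a b -> g != 1%g ->
  (\sum_(S | PT a b S) (g \in S : nat))%N = 1%N.
Proof.
move=> gT ng; rewrite sum_bool.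
rewrite (eq_card (B := pred1 <[g]>%G)) ?card1 // => S /=.
rewrite /PT; apply/idP/eqP.
  case/andP=> /andP[_ /eqP cS] gS.
  by apply: (uniq_p cS _ gS (cycle_id g) ng); rewrite /= -/(order g) order_p.
move=> ->; rewrite inE cycle_subG gT cycle_id andbT -/(order g) order_p //.
by rewrite eqxx.
Qed.

Lemma cntT a b : #|[pred S | PT a b S]| = p.+1.
Proof.
set n := #|_|.
have A1 : (\sum_(g | (g \in Tg a b) && (g != 1%g)) \sum_(S | PT a b S) (g \in S : nat))%N
           = (p ^ 2 - 1)%N.
  rewrite (eq_bigr (fun _ => 1%N)) => [|g /andP[gT ng]]; last exact: cnt1.
  rewrite sum1_card.
  have := cardsD1 1%g (Tg a b); rewrite group1 card_Tg => ->.
  rewrite add1n subSS subn0; apply: eq_card => g; rewrite !inE andbC.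
  by [].
have A2 : (\sum_(g | (g \in Tg a b) && (g != 1%g)) \sum_(S | PT a b S) (g \in S : nat))%N
           = (n * (p - 1))%N.
  rewrite exchange_big /= (eq_bigr (fun _ => (p - 1)%N)) => [|S /andP[sST /eqP cS]].
    by rewrite sum_nat_const.
  rewrite sum_bool; have -> : (p - 1 = #|S| - 1)%N by rewrite cS.
  rewrite (cardsD1 1%g S) group1 add1n subSS subn0.
  apply: eq_card => g; rewrite !inE.
  case: (boolP (g \in S)) => gS; last by rewrite !andbF.
  by rewrite (subsetP sST g gS) andbT.
have : (n * (p - 1) = p.+1 * (p - 1))%N.
  rewrite -A2 A1; have := p_gt1; case: p => [|q] //= _.
  nia.
move/eqP; rewrite eqn_pmul2r ?subn_gt0 ?p_gt1 //; exact: eqP.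
Qed.


Lemma p3E : (p ^ 3 = p * p ^ 2)%N. Proof. by rewrite -expnS. Qed.

Definition xab a b : burnside p :=
  [ffun S => ((p * (S == Tg a b))%:Z - (PT a b S)%:Z + (S == 1%G)%:Z)%R].

Lemma sumPosz (I : finType) (P : pred I) (F : I -> nat) :
  (\sum_(i | P i) Posz (F i))%R = Posz (\sum_(i | P i) F i)%N.
Proof. by rewrite (big_morph Posz PoszD (erefl (Posz 0))). Qed.

Lemma sum_eqS (F : {group GC p} -> nat) T : (\sum_S (S == T) * F S)%N = F T.
Proof.
rewrite (bigD1 T) //= eqxx mul1n big1 ?addn0 // => S nST.
by rewrite (negbTE nST).
Qed.

Lemma sum_mulb (P : pred {group GC p}) (F : {group GC p} -> nat) :
  (\sum_S P S * F S)%N = (\sum_(S | P S) F S)%N.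
Proof. by rewrite [RHS]big_mkcond; apply: eq_bigr => S _; case: (P S); rewrite ?mul1n. Qed.

Lemma xab_RQ a b : to_RQ (xab a b) = 0%R.
Proof.
apply/RQ0 => h.
have E : forall S, (xab a b S * (cc S h)%:Z =
    Posz ((p * (S == Tg a b) + (S == 1%G)) * cc S h)%N - Posz ((PT a b S) * cc S h)%N)%R.
  move=> S; rewrite ffunE !PoszM PoszD !PoszM.
  by rewrite mulrDl mulrBl addrAC mulrDl.
under eq_bigr do rewrite E.
rewrite sumrB !sumPosz; apply/eqP; rewrite subr_eq0.
apply/eqP; congr Posz.
rewrite sum_mulb (eq_bigr (fun S => p * ((S == Tg a b) * cc S h) + (S == 1%G) * cc S h)%N);
  last by move=> S _; rewrite mulnDl mulnA.
rewrite big_split /= -big_distrr /= !sum_eqS.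
rewrite (eq_bigr (fun S : {group GC p} => p ^ 2 * (h \in S))%N) => [|S /andP[_ /eqP cS]]; last first.
  by rewrite cc_E cS p3E mulKn ?p_pos.
rewrite -big_distrr /= !cc_E card_Tg cards1 divn1.
have e3 : (p ^ 3 %/ p ^ 2 = p)%N by rewrite p3E mulnK // expn_gt0 p_pos.
rewrite e3.
case: (eqVneq h 1%g) => [->|nh].
  rewrite group1 (eq_bigr (fun _ => 1%N)) => [|S _]; last by rewrite group1.
  rewrite sum1_card cntT.
  have : (1%g \in (1%G : {group GC p})) by rewrite group1.
  move=> ->; nia.
have h1 : (h \in (1%G : {group GC p})) = false.
  by apply: negbTE; move: nh; apply: contra; rewrite /= inE.
rewrite h1 muln0 addn0.
case: (boolP (h \in Tg a b)) => hT.
  by rewrite cnt1 //; nia.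
rewrite big1 ?muln0 // => S /andP[sST _].
case: (boolP (h \in S)) => // hS; case/negP: hT; exact: (subsetP sST h hS).
Qed.


Lemma xab_BGC a b : in_BGC (xab a b).
Proof.
move=> S ng; rewrite ffunE.
case: (boolP (S \subset Tg a b)) => sST.
  by exfalso; apply: ng; exact: sub_Tg_graph sST.
have -> : (S == Tg a b) = false by case: eqP => // e; move: sST; rewrite e subxx.
have -> : (S == 1%G) = false by case: eqP => // e; move: sST; rewrite e sub1G.
by rewrite /PT (negbTE sST) muln0 subr0.
Qed.

Lemma memTg a b k : ((k, rhof a b k) : GC p) \in Tg a b.
Proof. by apply/imsetP; exists k; rewrite ?inE. Qed.

Lemma rhof_e1 a b : rhof a b ((1%R : 'Z_p), (0%R : 'Z_p)) = a.
Proof. by rewrite /rhof /= mulr1 mulr0 addr0. Qed.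

Lemma rhof_e2 a b : rhof a b ((0%R : 'Z_p), (1%R : 'Z_p)) = b.
Proof. by rewrite /rhof /= mulr1 mulr0 add0r. Qed.

Lemma Tg_inj a b a' b' : Tg a b = Tg a' b' -> a = a' /\ b = b'.
Proof.
move=> E; split.
  have := memTg a b ((1%R : 'Z_p), (0%R : 'Z_p)); rewrite E.
  case/imsetP => k _ ek.
  have e1k : ((1%R : 'Z_p), (0%R : 'Z_p)) = k :> GG p := congr1 fst ek.
  have e2 := congr1 snd ek.
  change (rhof a b ((1%R : 'Z_p), (0%R : 'Z_p)) = rhof a' b' k) in e2.
  by rewrite -e1k !rhof_e1 in e2.
have := memTg a b ((0%R : 'Z_p), (1%R : 'Z_p)); rewrite E.
case/imsetP => k _ ek.
have e1k : ((0%R : 'Z_p), (1%R : 'Z_p)) = k :> GG p := congr1 fst ek.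
have e2 := congr1 snd ek.
change (rhof a b ((0%R : 'Z_p), (1%R : 'Z_p)) = rhof a' b' k) in e2.
by rewrite -e1k !rhof_e2 in e2.
Qed.

Lemma xab_Tg a b a' b' :
  xab a b (Tg a' b') = Posz (p * ((a' == a) && (b' == b)))%N.
Proof.
rewrite ffunE.
have -> : PT a b (Tg a' b') = false.
  rewrite /PT card_Tg; apply/negbTE; rewrite negb_and; apply/orP; right.
  apply/eqP => e; have := p_gt1; nia.
have -> : (Tg a' b' == 1%G) = false.
  case: eqP => // e; have := card_Tg a' b'; rewrite e cards1 => e1.
  have := p_gt1; nia.
have -> : (Tg a' b' == Tg a b) = (a' == a) && (b' == b).
  apply/eqP/andP => [/Tg_inj [-> ->] //|[/eqP -> /eqP ->] //].
by rewrite subr0 addr0.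
Qed.

End S.

Lemma card_ZZ p : prime p -> #|{: 'Z_p * 'Z_p}| = (p ^ 2)%N.
Proof.
move=> pr; rewrite card_prod card_ord Zp_cast ?prime_gt1 // mulnn.
Qed.

Theorem mainTheorem16 (p : nat) : prime p -> rank_KGC_eq p (p ^ 2).
Proof.
move=> pr; have E := card_ZZ pr.
pose ab (i : 'I_(p ^ 2)) := enum_val (cast_ord (esym E) i).
have abinj : injective ab.
  by move=> i j /enum_val_inj /cast_ord_inj.
split.
  exists (fun i => xab (ab i).1 (ab i).2); split.
    by move=> i; split; [exact: xab_BGC | exact: xab_RQ].
  move=> c H j.
  have := H (Tg (ab j).1 (ab j).2).
  rewrite (bigD1 j) //= xab_Tg // !eqxx muln1 big1 ?addr0 => [|i nij].
    move/eqP; rewrite mulf_eq0 => /orP[/eqP //|].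
    by move/eqP => [] /eqP; rewrite (gtn_eqF (prime_gt0 pr)).
  rewrite xab_Tg //.
  have -> : (((ab j).1 == (ab i).1) && ((ab j).2 == (ab i).2)) = false.
    rewrite -xpair_eqE -!surjective_pairing.
    by apply/negbTE; rewrite (inj_eq abinj) eq_sym.
  by rewrite muln0 mulr0.
move=> n v vK vI.
rewrite -E.
apply: (@indep_le _ n (fun i (x : 'Z_p * 'Z_p) => v i (Tg x.1 x.2))).
move=> c cz i; apply: vI => S.
pose y : burnside p := [ffun S => \sum_i c i * v i S]%R.
have yK : in_KGC y.
  split.
    move=> S' ng; rewrite ffunE big1 // => k _.
    by rewrite ((vK k).1 S' ng) mulr0.
  apply/RQ0 => h.
  under eq_bigr do rewrite ffunE mulr_suml.
  rewrite exchange_big big1 // => k _ /=.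
  under eq_bigr do rewrite -mulrA.
  by rewrite -mulr_sumr ((RQ0 (v k)).1 (vK k).2 h) mulr0.
have yT : forall a b, y (Tg a b) = 0%R.
  by move=> a b; rewrite /y ffunE; exact: (cz (a, b)).
by have := ker_zero pr yK yT S; rewrite /y ffunE.
Qed.
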